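(* Let $r=1$ with single input node $q$ (so $\Pi=\mathbf e_q$), $G\ge0$ entrywise, $\overline\lambda(G)<1$, $\sigma_v^2>0$, and let $(\mathcal S,\{j\},\mathcal P)$ be a node cutset partition with singleton cutset $\{j\}$. Let $\widetilde G=[G_{pp}\ G_{pc}]$. If every row sum of $\widetilde G$ is at most $1$, then for every $j_1\in\mathcal P$: $\mathbb P_{e_m}(j)\le\mathbb P_{e_m}(j_1)$ and $\mathbb P_{e_v}(j)\le\mathbb P_{e_v}(j_1)$. If every row sum of $\widetilde G$ is greater than $1$, then for every $j_1\in\mathcal P$: $\mathbb P_{e_m}(j)\ge\mathbb P_{e_m}(j_1)$ and $\mathbb P_{e_v}(j)\ge\mathbb P_{e_v}(j_1)$.
   Context: $G=[g_{ij}]\in\mathbb R^{n\times n}$. For a single sensor node $l$, $T_l(z)=\mathbf e_l^T(zI-G)^{-1}\mathbf e_q$ (scalar), $\|T_l\|_\infty=\sup_{|z|=1}|T_l(z)|$. The scalar input under $H_i$ has law $\mathcal N(\mu_i,\sigma_i^2)$; $N\in\mathbb N$. Mean shift ($\sigma_1^2=\sigma_2^2=\sigma_c^2>0$, $\mu_\Delta=\mu_2-\mu_1$): $\eta_s(l)^2=N\mu_\Delta^2|T_l(1)|^2/(\sigma_c^2|T_l(1)|^2+\sigma_v^2)$ and $\mathbb P_{e_m}(l)=Q_{\mathcal N}(\eta_s(l)/2)$. Covariance shift ($\mu_1=\mu_2$, $\sigma_1^2>\sigma_2^2\ge0$): $R_s(l)=(\sigma_1^2\|T_l\|_\infty^2+\sigma_v^2)/(\sigma_2^2\|T_l\|_\infty^2+\sigma_v^2)$,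 $\tau(R)=\ln R/(R-1)$ for $R>1$, $\tau(1)=1$, $\mathbb P_{e_v}(l)=\tfrac12[1-Q_{\chi^2}(1,\tau(R_s(l)))]+\tfrac12Q_{\chi^2}(1,\tau(R_s(l))R_s(l))$. $Q_{\mathcal N}(t)=\Pr[Z\ge t]$, $Z\sim\mathcal N(0,1)$; $Q_{\chi^2}(1,t)=\Pr[Y\ge t]$, $Y\sim\chi^2(1)$. Node cutset: a partition $\{1,\dots,n\}=\mathcal S\sqcup\mathcal C\sqcup\mathcal P$ into nonempty sets with the input node $q\in\mathcal S$, $\mathrm{dist}(\{q\},\mathcal C)\ge d$ for some $d\ge1$ (graph distance in the digraph with edges $\{(i,j):g_{ij}\ne0\}$), and $g_{ij}=g_{ji}=0$ for all $i\in\mathcal P$, $j\in\mathcal S$. $G_{pp}$, $G_{pc}$ are the submatrices of $G$ with rows in $\mathcal P$ and columns in $\mathcal P$, resp. $\mathcal C$. $\overline\lambda$ is spectral radius. *)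

(* Defs.v *)
From Stdlib Require Import Reals Lra Lia ClassicalEpsilon.
Open Scope R_scope.

Fixpoint rsum (n : nat) (f : nat -> R) : R :=
  match n with O => 0 | S m => rsum m f + f m end.

Definition Cx := (R * R)%type.
Definition Cre (z : Cx) : R := fst z.
Definition Cim (z : Cx) : R := snd z.
Definition RtoC (x : R) : Cx := (x, 0).
Definition Cadd (a b : Cx) : Cx := (fst a + fst b, snd a + snd b).
Definition Csub (a b : Cx) : Cx := (fst a - fst b, snd a - snd b).
Definition Cmul (a b : Cx) : Cx :=
  (fst a * fst b - snd a * snd b, fst a * snd b + snd a * fst b).
Definition Cmod (z : Cx) : R := sqrt (fst z ^ 2 + snd z ^ 2).
Fixpoint Csum (n : nat) (f : nat -> Cx) : Cx :=
  match n with O => RtoC 0 | S m => Cadd (Csum m f) (f m) end.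

(** * Real n x n matrices G : nat -> nat -> R (nodes 1..n are indices 0..n-1) *)
Definition nonneg_mx (n : nat) (G : nat -> nat -> R) : Prop :=
  forall i k, (i < n)%nat -> (k < n)%nat -> 0 <= G i k.

Definition Cmxv (n : nat) (G : nat -> nat -> R) (v : nat -> Cx) (i : nat) : Cx :=
  Csum n (fun k => Cmul (RtoC (G i k)) (v k)).

Definition is_eigenvalue (n : nat) (G : nat -> nat -> R) (lam : Cx) : Prop :=
  exists v : nat -> Cx,
    (exists i, (i < n)%nat /\ v i <> RtoC 0) /\
    (forall i, (i < n)%nat -> Cmxv n G v i = Cmul lam (v i)).

Definition spectral_radius_lt (n : nat) (G : nat -> nat -> R) (c : R) : Prop :=
  forall lam, is_eigenvalue n G lam -> Cmod lam < c.

(** * Transfer function T_l(z) = e_l^T (zI - G)^{-1} e_q.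
    (zI - G)^{-1} e_q is the solution x of (zI - G) x = e_q. *)
Definition solves_resolvent (n : nat) (G : nat -> nat -> R) (q : nat) (z : Cx)
  (x : nat -> Cx) : Prop :=
  forall i, (i < n)%nat ->
    Csub (Cmul z (x i)) (Cmxv n G x i) = RtoC (if Nat.eqb i q then 1 else 0).

Definition resolvent_eq (n : nat) (G : nat -> nat -> R) (q : nat) (z : Cx) : nat -> Cx :=
  epsilon (inhabits (fun _ => RtoC 0)) (solves_resolvent n G q z).

Definition Tf (n : nat) (G : nat -> nat -> R) (q l : nat) (z : Cx) : Cx :=
  resolvent_eq n G q z l.

Definition Hinf_norm (n : nat) (G : nat -> nat -> R) (q l : nat) : R :=
  epsilon (inhabits 0)
    (is_lub (fun y => exists z, Cmod z = 1 /\ y = Cmod (Tf n G q l z))).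

(** * Gaussian tail Q_N(t) = Pr[Z >= t], Z ~ N(0,1),
    written as 1/2 - (1/sqrt(2 pi)) * int_0^t exp(-x^2/2) dx. *)
Definition gauss_density_unnorm (x : R) : R := exp (- (x * x) / 2).

Lemma gauss_continuity : continuity gauss_density_unnorm.
Proof.
  unfold gauss_density_unnorm. intro x.
  apply continuity_pt_comp with (f1 := fun x => - (x * x) / 2) (f2 := exp).
  - unfold Rdiv. apply continuity_pt_mult.
    + apply continuity_pt_opp. apply continuity_pt_mult;
      apply derivable_continuous_pt; apply derivable_pt_id.
    + apply continuity_pt_const. intros a b; reflexivity.
  - apply derivable_continuous_pt. apply derivable_pt_exp.
Qed.

Definition gauss_integrable (a b : R) : Riemann_integrable gauss_density_unnorm a b.
Proof.
  destruct (Rle_dec a b) as [H|H].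
  - apply continuity_implies_RiemannInt; [exact H|].
    intros; apply gauss_continuity.
  - apply RiemannInt_P1. apply continuity_implies_RiemannInt; [lra|].
    intros; apply gauss_continuity.
Defined.

Definition QN (t : R) : R :=
  / 2 - / sqrt (2 * PI) * RiemannInt (gauss_integrable 0 t).

(** Chi-square(1) tail: Q_chi2(1,t) = Pr[Y >= t], Y = Z^2, Z ~ N(0,1):
    equals 1 for t <= 0 and Pr[|Z| >= sqrt t] = 2 Q_N(sqrt t) for t > 0. *)
Definition Qchi2_1 (t : R) : R :=
  if Rle_dec t 0 then 1 else 2 * QN (sqrt t).

Definition eta_s (n : nat) (G : nat -> nat -> R) (q : nat) (N : nat)
  (mu_D sc2 sv2 : R) (l : nat) : R :=
  let T1 := Cmod (Tf n G q l (RtoC 1)) in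
  sqrt (INR N * mu_D ^ 2 * T1 ^ 2 / (sc2 * T1 ^ 2 + sv2)).

Definition Pem (n : nat) (G : nat -> nat -> R) (q : nat) (N : nat)
  (mu_D sc2 sv2 : R) (l : nat) : R :=
  QN (eta_s n G q N mu_D sc2 sv2 l / 2).

Definition Rs (n : nat) (G : nat -> nat -> R) (q : nat) (s12 s22 sv2 : R) (l : nat) : R :=
  let h := Hinf_norm n G q l in
  (s12 * h ^ 2 + sv2) / (s22 * h ^ 2 + sv2).

Definition tau (r : R) : R := if Req_EM_T r 1 then 1 else ln r / (r - 1).

Definition Pev (n : nat) (G : nat -> nat -> R) (q : nat) (s12 s22 sv2 : R) (l : nat) : R :=
  let r := Rs n G q s12 s22 sv2 l in
  / 2 * (1 - Qchi2_1 (tau r)) + / 2 * Qchi2_1 (tau r * r).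

(** * Graph distance: walk of length k from a to b in the digraph with
    edges (i,k) such that g_ik <> 0 *)
Inductive walk (n : nat) (G : nat -> nat -> R) : nat -> nat -> nat -> Prop :=
| walk0 : forall a, (a < n)%nat -> walk n G 0 a a
| walkS : forall k a b c, (a < n)%nat -> (b < n)%nat -> G a b <> 0 ->
    walk n G k b c -> walk n G (S k) a c.

Definition dist_ge (n : nat) (G : nat -> nat -> R) (q : nat) (C : nat -> bool) (d : nat) : Prop :=
  forall k c, (k < d)%nat -> C c = true -> ~ walk n G k q c.

Definition node_cutset (n : nat) (G : nat -> nat -> R) (q : nat)
  (Sset Cset Pset : nat -> bool) : Prop :=
  (forall i, Sset i = true \/ Cset i = true \/ Pset i = true -> (i < n)%nat) /\
  (forall i, (i < n)%nat ->
     (Sset i = true /\ Cset i = false /\ Pset i = false) \/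
     (Sset i = false /\ Cset i = true /\ Pset i = false) \/
     (Sset i = false /\ Cset i = false /\ Pset i = true)) /\
  (exists i, Sset i = true) /\ (exists i, Cset i = true) /\ (exists i, Pset i = true) /\
  Sset q = true /\
  (exists d, (1 <= d)%nat /\ dist_ge n G q Cset d) /\
  (forall i k, Pset i = true -> Sset k = true -> G i k = 0 /\ G k i = 0).

Definition Gtilde_rowsum (n : nat) (G : nat -> nat -> R) (Cset Pset : nat -> bool) (i : nat) : R :=
  rsum n (fun k => if orb (Pset k) (Cset k) then G i k else 0).

(* Main.v *)
Require Import Defs.
From Stdlib Require Import Reals Lra Lia ClassicalEpsilon Classical.
From Coquelicot Require Import Coquelicot.
Open Scope R_scope.

Notation cz := (Complex.RtoC 0).

Lemma Csum_S n f : Csum (S n) f = Cplus (Csum n f) (f n).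
Proof. reflexivity. Qed.

Lemma Csum_ext n f g : (forall k, (k < n)%nat -> f k = g k) -> Csum n f = Csum n g.
Proof.
  induction n; intros H; [reflexivity|]. rewrite !Csum_S, IHn by (intros; apply H; lia).
  rewrite H by lia. reflexivity.
Qed.

Lemma Csum_plus n f g : Csum n (fun k => Cplus (f k) (g k)) = Cplus (Csum n f) (Csum n g).
Proof.
  induction n. - apply injective_projections; cbn; lra.
  - rewrite !Csum_S, IHn. idtac.
match goal with |- @eq _ ?a ?b => change (@eq Complex.C a b) end. ring. Qed.

Ltac cring := match goal with |- @eq _ ?a ?b => change (@eq Complex.C a b) end; ring.
Ltac cfield := match goal with |- @eq _ ?a ?b => change (@eq Complex.C a b) end; field.

Lemma Csum_minus n f g : Csum n (fun k => Cminus (f k) (g k)) = Cminus (Csum n f) (Csum n g).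
Proof.
  induction n. - apply injective_projections; cbn; lra.
  - rewrite !Csum_S, IHn. cring.
Qed.


Lemma Csum_scal n c f : Csum n (fun k => Cmult c (f k)) = Cmult c (Csum n f).
Proof.
  induction n. - apply injective_projections; cbn; lra.
  - rewrite !Csum_S, IHn. cring.
Qed.

Lemma Csum_zero n : Csum n (fun _ => cz) = cz.
Proof. induction n; [reflexivity|]. rewrite Csum_S, IHn. apply injective_projections; cbn; lra. Qed.
Definition mv n (A : nat -> nat -> Complex.C) (x : nat -> Complex.C) i : Complex.C :=
  Csum n (fun k => Cmult (A i k) (x k)).

Definition Finj n A := forall x, (forall i, (i<n)%nat -> mv n A x i = cz) -> forall i, (i<n)%nat -> x i = cz.
Definition Fsurj n A := forall b, exists x, forall i, (i<n)%nat -> mv n A x i = b i.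

Lemma fred_pivot n A :
  (forall A', Finj n A' -> Fsurj n A') ->
  A n n <> cz -> Finj (S n) A -> Fsurj (S n) A.
Proof.
  intros IH Hp Hinj.
  set (A' := fun i k => Cminus (A i k) (Cmult (Cdiv (A i n) (A n n)) (A n k))).
  assert (Hrow : forall (x : nat -> Complex.C) i,
    mv n A' x i = Cminus (mv n A x i) (Cmult (Cdiv (A i n) (A n n)) (mv n A x n))).
  { intros x i. unfold mv, A'. rewrite <- Csum_scal, <- Csum_minus. apply Csum_ext; intros; cring. }
  assert (Hext : forall (x : nat -> Complex.C) xn i,
    mv (S n) A (fun k => if (k <? n)%nat then x k else xn) i = Cplus (mv n A x i) (Cmult (A i n) xn)).
  { intros x xn i. unfold mv. rewrite Csum_S. rewrite Nat.ltb_irrefl. f_equal.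
    apply Csum_ext; intros k Hk. apply Nat.ltb_lt in Hk. rewrite Hk. reflexivity. }
  assert (Hinj' : Finj n A').
  { intros x Hx. set (xn := Cdiv (Copp (mv n A x n)) (A n n)).
    assert (H0 : forall i, (i < S n)%nat -> mv (S n) A (fun k => if (k <? n)%nat then x k else xn) i = cz).
    { intros i Hi. rewrite Hext. destruct (Nat.eq_dec i n) as [->|Hne].
      - unfold xn. cfield. exact Hp.
      - specialize (Hx i ltac:(lia)). rewrite Hrow in Hx. unfold xn. rewrite <- Hx. cfield. exact Hp. }
    intros i Hi. specialize (Hinj _ H0 i ltac:(lia)). simpl in Hinj.
    apply Nat.ltb_lt in Hi. rewrite Hi in Hinj. exact Hinj. }
  intros b.
  destruct (IH A' Hinj' (fun i => Cminus (b i) (Cmult (Cdiv (A i n) (A n n)) (b n)))) as [x Hx].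
  set (xn := Cdiv (Cminus (b n) (mv n A x n)) (A n n)).
  exists (fun k => if (k <? n)%nat then x k else xn).
  intros i Hi. rewrite Hext. destruct (Nat.eq_dec i n) as [->|Hne].
  - unfold xn. cfield. exact Hp.
  - specialize (Hx i ltac:(lia)). rewrite Hrow in Hx. unfold xn.
    assert (E : mv n A x i = Cplus (Cminus (b i) (Cmult (Cdiv (A i n) (A n n)) (b n)))
                    (Cmult (Cdiv (A i n) (A n n)) (mv n A x n))).
    { rewrite <- Hx. cring. }
    rewrite E. cfield. exact Hp.
Qed.

Definition sw (r n i : nat) : nat := if (i =? r)%nat then n else if (i =? n)%nat then r else i.

Lemma sw_lt r n i : (r <= n)%nat -> (i <= n)%nat -> (sw r n i <= n)%nat.
Proof. unfold sw; intros; destruct (Nat.eqb_spec i r); destruct (Nat.eqb_spec i n); lia. Qed.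

Lemma sw_inv r n i : sw r n (sw r n i) = i.
Proof. unfold sw; destruct (Nat.eqb_spec i r); destruct (Nat.eqb_spec i n);
  repeat (match goal with |- context [Nat.eqb ?a ?b] => destruct (Nat.eqb_spec a b) end); lia. Qed.

Lemma fredholm n : forall A, Finj n A -> Fsurj n A.
Proof.
  induction n; intros A Hinj.
  - intros b. exists (fun _ => cz). intros; lia.
  - destruct (classic (exists r, (r <= n)%nat /\ A r n <> cz)) as [[r [Hr Hp]]|Hno].
    + set (B := fun i k => A (sw r n i) k).
      assert (HB : forall x i, mv (S n) B x i = mv (S n) A x (sw r n i)) by reflexivity.
      assert (Hp' : B n n <> cz).
      { unfold B, sw. rewrite Nat.eqb_refl. destruct (Nat.eqb_spec n r); subst; auto. }
      assert (HiB : Finj (S n) B).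
      { intros x Hx i Hi. apply Hinj; auto. intros j Hj.
        rewrite <- (sw_inv r n j). rewrite <- HB. apply Hx. pose proof (sw_lt r n j); lia. }
      intros b. destruct (fred_pivot n B IHn Hp' HiB (fun i => b (sw r n i))) as [x Hx].
      exists x. intros i Hi. rewrite <- (sw_inv r n i). rewrite <- HB. apply Hx.
      pose proof (sw_lt r n i); lia.
    + exfalso.
      assert (H0 : forall i, (i < S n)%nat -> mv (S n) A (fun k => if (k =? n)%nat then Complex.RtoC 1 else cz) i = cz).
      { intros i Hi. unfold mv. rewrite Csum_S, Nat.eqb_refl.
        rewrite (Csum_ext n _ (fun _ => cz)).
        - rewrite Csum_zero. assert (A i n = cz) as ->.
          { destruct (classic (A i n = cz)); auto. exfalso; apply Hno; exists i; split; [lia|auto]. }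
          cring.
        - intros k Hk. destruct (Nat.eqb_spec k n); [lia|]. cring. }
      specialize (Hinj _ H0 n ltac:(lia)). simpl in Hinj. rewrite Nat.eqb_refl in Hinj.
      injection Hinj. lra.
Qed.

Lemma rsum_S n f : rsum (S n) f = rsum n f + f n.
Proof. reflexivity. Qed.

Lemma rsum_ext n f g : (forall k, (k < n)%nat -> f k = g k) -> rsum n f = rsum n g.
Proof. induction n; intros H; [reflexivity|]. rewrite !rsum_S, IHn by (intros; apply H; lia). rewrite H by lia. reflexivity. Qed.

Lemma rsum_plus n f g : rsum n (fun k => f k + g k) = rsum n f + rsum n g.
Proof. induction n; simpl; [lra|]. rewrite IHn; lra. Qed.

Lemma rsum_scal n c f : rsum n (fun k => c * f k) = c * rsum n f.
Proof. induction n; simpl; [lra|]. rewrite IHn; lra. Qed.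

Lemma rsum_opp n f : rsum n (fun k => - f k) = - rsum n f.
Proof. induction n; simpl; [lra|]. rewrite IHn; lra. Qed.

Lemma rsum_zero n : rsum n (fun _ => 0) = 0.
Proof. induction n; simpl; lra. Qed.

Lemma rsum_le n f g : (forall k, (k < n)%nat -> f k <= g k) -> rsum n f <= rsum n g.
Proof. induction n; intros H; simpl; [lra|]. assert (f n <= g n) by (apply H; lia).
  assert (rsum n f <= rsum n g) by (apply IHn; intros; apply H; lia). lra. Qed.

Lemma rsum_nonneg n f : (forall k, (k < n)%nat -> 0 <= f k) -> 0 <= rsum n f.
Proof. intros H. rewrite <- (rsum_zero n). apply rsum_le. auto. Qed.

Lemma rsum_abs n f : Rabs (rsum n f) <= rsum n (fun k => Rabs (f k)).
Proof. induction n; simpl. - rewrite Rabs_R0; lra.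
  - eapply Rle_trans; [apply Rabs_triang|]. lra. Qed.

Lemma rsum_swap n m (F : nat -> nat -> R) :
  rsum n (fun i => rsum m (fun k => F i k)) = rsum m (fun k => rsum n (fun i => F i k)).
Proof. induction n; simpl. - rewrite rsum_zero; lra.
  - rewrite IHn, <- rsum_plus. reflexivity. Qed.

Lemma rsum_term n f k : (k < n)%nat -> (forall i, (i < n)%nat -> 0 <= f i) -> f k <= rsum n f.
Proof. induction n; intros Hk H; [lia|]. simpl. destruct (Nat.eq_dec k n) as [->|].
  - assert (0 <= rsum n f) by (apply rsum_nonneg; intros; apply H; lia). lra.
  - assert (f k <= rsum n f) by (apply IHn; [lia| intros; apply H; lia]). assert (0 <= f n) by (apply H; lia). lra. Qed.

Lemma rsum_nonneg_zero n f : (forall i, (i < n)%nat -> 0 <= f i) -> rsum n f <= 0 -> forall k, (k < n)%nat -> f k = 0.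
Proof. intros H Hs k Hk. pose proof (rsum_term n f k Hk H). specialize (H k Hk). lra. Qed.

Lemma rsum_delta n f j : (j < n)%nat -> rsum n (fun k => if (k =? j)%nat then f k else 0) = f j.
Proof. induction n; intros Hj; [lia|]. simpl. destruct (Nat.eqb_spec n j).
  - subst. rewrite (rsum_ext _ _ (fun _ => 0)). rewrite rsum_zero; lra.
    intros k Hk. destruct (Nat.eqb_spec k j); [lia|reflexivity].
  - rewrite IHn by lia. lra. Qed.

Definition rmv n (G : nat -> nat -> R) (l : R) (d : nat -> R) (i : nat) : R :=
  l * d i - rsum n (fun k => G i k * d k).

Definition nrm n (d : nat -> R) : R := rsum n (fun i => Rabs (d i)).

Definition Ppos n G l : Prop :=
  forall d, (forall i, (i < n)%nat -> 0 <= rmv n G l d i) -> forall i, (i < n)%nat -> 0 <= d i.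

Definition Rsurj n G l : Prop := forall b, exists d, forall i, (i < n)%nat -> rmv n G l d i = b i.
Definition Kbound n G l K : Prop := forall d, nrm n d <= K * nrm n (rmv n G l d).

Definition negp (d : nat -> R) i := Rmax (- d i) 0.

Lemma nrm_nonneg n d : 0 <= nrm n d.
Proof. apply rsum_nonneg; intros; apply Rabs_pos. Qed.

Lemma Transfer n G a b K : a <= b -> Ppos n G b -> Rsurj n G b -> Kbound n G b K -> 0 < K ->
  (b - a) * K <= / 2 -> Ppos n G a.
Proof.
  intros Hab Pb Sb Kb HK Hs d Hd.
  set (m := negp d).
  assert (Hm0 : forall i, 0 <= m i) by (intros; unfold m, negp; apply Rmax_r).
  destruct (Sb (fun i => (b - a) * m i)) as [e He].
  assert (He0 : forall i, (i < n)%nat -> 0 <= e i).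
  { apply Pb. intros i Hi. rewrite He by auto. specialize (Hm0 i). nra. }
  assert (Hde : forall i, (i < n)%nat -> 0 <= d i + e i).
  { apply Pb. intros i Hi. unfold rmv.
    rewrite (rsum_ext n _ (fun k => G i k * d k + G i k * e k)) by (intros; ring).
    rewrite rsum_plus.
    pose proof (He i Hi) as Hei. unfold rmv in Hei. pose proof (Hd i Hi) as Hdi. unfold rmv in Hdi.
    assert (d i + m i >= 0) by (unfold m, negp; pose proof (Rmax_l (- d i) 0); lra).
    nra. }
  assert (Hme : forall i, (i < n)%nat -> m i <= e i).
  { intros i Hi. unfold m, negp. specialize (Hde i Hi). specialize (He0 i Hi). apply Rmax_lub; lra. }
  assert (N1 : nrm n m <= nrm n e).
  { apply rsum_le. intros i Hi. rewrite !Rabs_pos_eq; auto. }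
  assert (N2 : nrm n (rmv n G b e) = (b - a) * nrm n m).
  { unfold nrm. rewrite <- rsum_scal. apply rsum_ext. intros i Hi. rewrite He by auto.
    rewrite Rabs_mult, !Rabs_pos_eq; auto; lra. }
  pose proof (Kb e) as Ke. rewrite N2 in Ke.
  assert (Hz : nrm n m <= 0).
  { pose proof (nrm_nonneg n m). assert (nrm n m <= (b-a)*K * nrm n m) by nra. nra. }
  intros i Hi. assert (Rabs (m i) = 0).
  { apply (rsum_nonneg_zero n (fun i => Rabs (m i))); auto; intros; apply Rabs_pos. }
  rewrite Rabs_pos_eq in H by auto. unfold m, negp in H. pose proof (Rmax_l (- d i) 0). lra.
Qed.

Lemma rmv_shift n G l m y i : rmv n G l y i = rmv n G m y i + (l - m) * y i.
Proof. unfold rmv; ring. Qed.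

Lemma Kpert n G l m K : Kbound n G l K -> 0 < K -> Rabs (m - l) * K <= / 2 -> Kbound n G m (2 * K).
Proof.
  intros Kb HK Hs y.
  assert (H1 : nrm n (rmv n G l y) <= nrm n (rmv n G m y) + Rabs (m - l) * nrm n y).
  { unfold nrm. rewrite <- rsum_scal, <- rsum_plus. apply rsum_le. intros i Hi.
    rewrite (rmv_shift n G l m). eapply Rle_trans; [apply Rabs_triang|].
    rewrite Rabs_mult. replace (Rabs (l - m)) with (Rabs (m - l)) by (rewrite <- Rabs_Ropp; f_equal; ring). lra. }
  pose proof (Kb y). pose proof (nrm_nonneg n y). pose proof (nrm_nonneg n (rmv n G m y)).
  pose proof (Rabs_pos (m - l)). nra.
Qed.

Lemma Pbig n G : nonneg_mx n G -> forall l, rsum n (fun i => rsum n (fun k => G i k)) < l -> Ppos n G l.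
Proof.
  intros HG l Hl d Hd.
  set (S := rsum n (fun i => rsum n (fun k => G i k))).
  assert (HS0 : 0 <= S) by (apply rsum_nonneg; intros; apply rsum_nonneg; intros; apply HG; auto).
  set (m := negp d).
  assert (Hm0 : forall i, 0 <= m i) by (intros; unfold m, negp; apply Rmax_r).
  assert (Hi1 : forall i, (i < n)%nat -> l * m i <= rsum n (fun k => G i k * m k)).
  { intros i Hi. assert (0 <= rsum n (fun k => G i k * m k)).
    { apply rsum_nonneg; intros. apply Rmult_le_pos; auto. }
    destruct (Rle_dec (- d i) 0) as [Hle|Hgt].
    { replace (m i) with 0 by (unfold m, negp; rewrite Rmax_right; lra). lra. }
    replace (m i) with (- d i) by (unfold m, negp; rewrite Rmax_left; lra).
    pose proof (Hd i Hi) as Hdi. unfold rmv in Hdi.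
    assert (rsum n (fun k => - (G i k * m k)) <= rsum n (fun k => G i k * d k)).
    { apply rsum_le. intros k Hk. unfold m, negp. pose proof (Rmax_l (- d k) 0). pose proof (HG i k Hi Hk). nra. }
    rewrite rsum_opp in H0. lra. }
  assert (Hsum : l * nrm n m <= S * nrm n m).
  { unfold nrm. rewrite <- rsum_scal.
    apply Rle_trans with (rsum n (fun i => rsum n (fun k => G i k * m k))).
    { apply rsum_le. intros i Hi. rewrite Rabs_pos_eq by auto. auto. }
    rewrite rsum_swap. rewrite <- rsum_scal. apply rsum_le. intros k Hk.
    rewrite Rabs_pos_eq by auto.
    rewrite (rsum_ext n _ (fun i => m k * G i k)) by (intros; ring). rewrite rsum_scal.
    rewrite (Rmult_comm S). apply Rmult_le_compat_l; auto.
    unfold S. apply rsum_le. intros i Hi. apply (rsum_term n (fun k => G i k) k Hk).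
    intros; apply HG; auto. }
  assert (Hz : nrm n m <= 0). { fold S in Hl. assert (0 < l - S) by lra. assert ((l-S) * nrm n m <= (l-S)*0) by lra. apply Rmult_le_reg_l in H0; auto. }
  intros i Hi. assert (Rabs (m i) = 0).
  { apply (rsum_nonneg_zero n (fun i => Rabs (m i))); auto; intros; apply Rabs_pos. }
  rewrite Rabs_pos_eq in H by auto. unfold m, negp in H. pose proof (Rmax_l (- d i) 0). lra.
Qed.

Lemma P_one n G : nonneg_mx n G ->
  (forall l, 1 <= l -> Rsurj n G l /\ exists K, 0 < K /\ Kbound n G l K) -> Ppos n G 1.
Proof.
  intros HG Hall.
  set (S := rsum n (fun i => rsum n (fun k => G i k))).
  assert (HS0 : 0 <= S) by (apply rsum_nonneg; intros; apply rsum_nonneg; intros; apply HG; auto).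
  set (E := fun t => exists l, t = - l /\ 1 <= l /\ forall mu, l <= mu -> Ppos n G mu).
  assert (Hb : bound E). { exists (-1). intros t [l [-> [Hl _]]]. lra. }
  assert (Hne : exists t, E t).
  { exists (- (S + 2)). exists (S + 2). split; [reflexivity|]. split; [lra|].
    intros mu Hmu. apply Pbig; auto. fold S; lra. }
  destruct (completeness E Hb Hne) as [m [Hub Hlub]].
  set (ls := - m).
  assert (Hls1 : 1 <= ls).
  { unfold ls. assert (m <= -1). { apply Hlub. intros t [l [-> [Hl _]]]. lra. } lra. }
  assert (Habove : forall mu, ls < mu -> Ppos n G mu).
  { intros mu Hmu. apply NNPP. intros Hn.
    assert (m <= - mu).
    { apply Hlub. intros t [l [-> [Hl Hp]]]. destruct (Rle_dec l mu) as [Hle|Hgt].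
      - exfalso; apply Hn; apply Hp; auto.
      - lra. }
    unfold ls in Hmu. lra. }
  destruct (Hall ls Hls1) as [Ss [K [HK Kb]]].
  assert (Pls : Ppos n G ls).
  { set (b := ls + / (4 * K)).
    assert (Hd : 0 < / (4 * K)) by (apply Rinv_0_lt_compat; lra).
    apply (Transfer n G ls b (2 * K)); unfold b.
    - lra.
    - apply Habove. lra.
    - apply Hall. lra.
    - apply (Kpert n G ls); auto. rewrite Rabs_pos_eq by lra. field_simplify; lra.
    - lra.
    - replace (ls + / (4 * K) - ls) with (/ (4 * K)) by ring. field_simplify; lra. }
  assert (Hls : ls = 1).
  { destruct (Req_dec ls 1) as [|Hne1]; auto. exfalso.
    set (a := Rmax 1 (ls - / (2 * K))).
    assert (Hd : 0 < / (2 * K)) by (apply Rinv_0_lt_compat; lra).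
    assert (Ha : a < ls) by (unfold a; apply Rmax_lub_lt; lra).
    assert (Ea : E (- a)).
    { exists a. split; [reflexivity|]. split; [apply Rmax_l|].
      intros mu Hmu. destruct (Rlt_le_dec mu ls).
      - apply (Transfer n G mu ls K); auto. lra.
        assert (ls - / (2 * K) <= mu) by (pose proof (Rmax_r 1 (ls - / (2 * K))); fold a in H; lra).
        assert ((ls - mu) * K <= / (2 * K) * K) by (apply Rmult_le_compat_r; lra).
        replace (/ (2 * K) * K) with (/ 2) in H0 by (field; lra). lra.
      - destruct (Req_dec mu ls) as [->|]; auto. apply Habove; lra. }
    pose proof (Hub _ Ea). unfold ls in Ha. lra. }
  rewrite <- Hls. exact Pls.
Qed.

Definition Mz (G : nat -> nat -> R) (z : Complex.C) (i k : nat) : Complex.C :=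
  Cminus (if (i =? k)%nat then z else cz) (RtoC (G i k)).

Lemma Csum_delta n (c : nat -> Complex.C) (x : nat -> Complex.C) i : (i < n)%nat ->
  Csum n (fun k => Cmult (if (i =? k)%nat then c k else cz) (x k)) = Cmult (c i) (x i).
Proof.
  induction n; intros Hi; [lia|]. rewrite Csum_S. destruct (Nat.eqb_spec i n).
  - subst. rewrite (Csum_ext n _ (fun _ => cz)). rewrite Csum_zero. cring.
    intros k Hk. destruct (Nat.eqb_spec n k); [lia|]. cring.
  - rewrite IHn by lia. cring.
Qed.

Lemma mv_Mz n G z x i : (i < n)%nat ->
  mv n (Mz G z) x i = Cminus (Cmult z (x i)) (Cmxv n G x i).
Proof.
  intros Hi. unfold mv, Mz, Cmxv.
  rewrite (Csum_ext n _ (fun k => Cminus (Cmult (if (i =? k)%nat then (fun _ => z) k else cz) (x k))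
      (Cmult (RtoC (G i k)) (x k)))) by (intros; cring).
  rewrite Csum_minus, Csum_delta by auto. reflexivity.
Qed.

Lemma Mz_inj n G z : spectral_radius_lt n G 1 -> 1 <= Defs.Cmod z -> Finj n (Mz G z).
Proof.
  intros Hsp Hz x Hx i Hi. apply NNPP. intros Hne.
  assert (He : is_eigenvalue n G z).
  { exists x. split. { exists i; split; auto. }
    intros j Hj. specialize (Hx j Hj). rewrite mv_Mz in Hx by auto.
    change (Cmul z (x j)) with (Cmult z (x j)).
    apply (f_equal (fun t => Cplus (Copp t) (Cmult z (x j)))) in Hx.
    match goal with |- @eq _ ?a ?b => change (@eq Complex.C a b) end.
    match type of Hx with @eq _ ?a ?b => change (@eq Complex.C a b) in Hx end.
    replace (Cmxv n G x j) with (Cplus (Copp (Cminus (Cmult z (x j)) (Cmxv n G x j))) (Cmult z (x j))) by cring.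
    rewrite Hx. cring. }
  specialize (Hsp z He). lra.
Qed.

Lemma resolvent_spec n G q z : spectral_radius_lt n G 1 -> 1 <= Defs.Cmod z ->
  solves_resolvent n G q z (resolvent_eq n G q z).
Proof.
  intros Hsp Hz. unfold resolvent_eq. apply epsilon_spec.
  destruct (fredholm n (Mz G z) (Mz_inj n G z Hsp Hz)
     (fun i => RtoC (if (i =? q)%nat then 1 else 0))) as [x Hx].
  exists x. intros i Hi. rewrite <- mv_Mz by auto. apply Hx; auto.
Qed.

Lemma Csum_fst n f : fst (Csum n f) = rsum n (fun k => fst (f k)).
Proof. induction n; [reflexivity|]. rewrite Csum_S. simpl. rewrite IHn. reflexivity. Qed.
Lemma Csum_snd n f : snd (Csum n f) = rsum n (fun k => snd (f k)).
Proof. induction n; [reflexivity|]. rewrite Csum_S. simpl. rewrite IHn. reflexivity. Qed.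

Lemma Cmxv_fst n G x i : fst (Cmxv n G x i) = rsum n (fun k => G i k * fst (x k)).
Proof. unfold Cmxv. rewrite Csum_fst. apply rsum_ext; intros; simpl; ring. Qed.
Lemma Cmxv_snd n G x i : snd (Cmxv n G x i) = rsum n (fun k => G i k * snd (x k)).
Proof. unfold Cmxv. rewrite Csum_snd. apply rsum_ext; intros; simpl; ring. Qed.

Lemma Cmod_real l : 0 <= l -> Defs.Cmod (RtoC l) = l.
Proof. intros. unfold Defs.Cmod. simpl. replace (l * (l * 1) + 0 * (0 * 1)) with (l * l) by ring.
  apply sqrt_square; auto. Qed.

Lemma real_surj n G l : spectral_radius_lt n G 1 -> 1 <= l -> Rsurj n G l.
Proof.
  intros Hsp Hl b.
  assert (Hz : 1 <= Defs.Cmod (RtoC l)) by (rewrite Cmod_real; lra).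
  destruct (fredholm n _ (Mz_inj n G _ Hsp Hz) (fun i => RtoC (b i))) as [x Hx].
  exists (fun k => fst (x k)). intros i Hi. specialize (Hx i Hi). rewrite mv_Mz in Hx by auto.
  apply (f_equal fst) in Hx. simpl in Hx. rewrite Cmxv_fst in Hx. unfold rmv. rewrite <- Hx. ring.
Qed.

Lemma real_inj n G l : spectral_radius_lt n G 1 -> 1 <= l -> forall d,
  (forall i, (i < n)%nat -> rmv n G l d i = 0) -> forall i, (i < n)%nat -> d i = 0.
Proof.
  intros Hsp Hl d Hd.
  assert (Hz : 1 <= Defs.Cmod (RtoC l)) by (rewrite Cmod_real; lra).
  pose proof (Mz_inj n G _ Hsp Hz (fun k => RtoC (d k))) as H.
  intros i Hi. assert (E : RtoC (d i) = cz).
  { apply H; auto. intros j Hj. rewrite mv_Mz by auto. apply injective_projections.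
    - simpl. rewrite Cmxv_fst. simpl. specialize (Hd j Hj). unfold rmv in Hd.
      lra.
    - simpl. rewrite Cmxv_snd. simpl. rewrite (rsum_ext n _ (fun _ => 0)). rewrite rsum_zero. ring.
      intros; ring. }
  apply (f_equal fst) in E. exact E.
Qed.

Lemma rmv_lin n G l (Y : nat -> nat -> R) (u : nat -> R) i :
  rmv n G l (fun k => rsum n (fun j => u j * Y j k)) i = rsum n (fun j => u j * rmv n G l (Y j) i).
Proof.
  unfold rmv.
  assert (E1 : rsum n (fun j => u j * (l * Y j i - rsum n (fun k => G i k * Y j k))) =
     l * rsum n (fun j => u j * Y j i) - rsum n (fun j => rsum n (fun k => u j * G i k * Y j k))).
  { unfold Rminus. rewrite <- rsum_scal, <- rsum_opp, <- rsum_plus. apply rsum_ext. intros j Hj.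
    rewrite (rsum_ext n (fun k => u j * G i k * Y j k) (fun k => u j * (G i k * Y j k))) by (intros; ring). rewrite rsum_scal. ring. }
  assert (E2 : rsum n (fun k => G i k * rsum n (fun j => u j * Y j k)) = rsum n (fun j => rsum n (fun k => u j * G i k * Y j k))).
  { rewrite (rsum_swap n n (fun j k => u j * G i k * Y j k)). apply rsum_ext. intros k Hk. rewrite <- rsum_scal. apply rsum_ext. intros; ring. }
  rewrite E1, E2. reflexivity.
Qed.

Lemma real_K n G l : spectral_radius_lt n G 1 -> 1 <= l -> exists K, 0 < K /\ Kbound n G l K.
Proof.
  intros Hsp Hl.
  set (P := fun j (y : nat -> R) => forall i, (i < n)%nat -> rmv n G l y i = if (i =? j)%nat then 1 else 0).
  set (Y := fun j => epsilon (inhabits (fun _ : nat => 0)) (P j)).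
  assert (HY : forall j, P j (Y j)).
  { intros j. unfold Y. apply epsilon_spec. apply real_surj; auto. }
  exists (1 + rsum n (fun j => nrm n (Y j))). split.
  { pose proof (rsum_nonneg n (fun j => nrm n (Y j)) (fun j _ => nrm_nonneg n (Y j))). lra. }
  intros d. set (u := rmv n G l d).
  set (d' := fun k => rsum n (fun j => u j * Y j k)).
  assert (Hdd : forall k, (k < n)%nat -> d k = d' k).
  { assert (H0 : forall i, (i < n)%nat -> rmv n G l (fun k => d k - d' k) i = 0).
    { intros i Hi. replace (rmv n G l (fun k => d k - d' k) i) with (u i - rmv n G l d' i)
        by (unfold u, rmv; rewrite (rsum_ext n (fun k => G i k * (d k - d' k)) (fun k => G i k * d k + - (G i k * d' k))) by (intros; ring); rewrite rsum_plus, rsum_opp; ring).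
      unfold d'. rewrite rmv_lin.
      rewrite (rsum_ext n _ (fun j => if (j =? i)%nat then u j else 0)).
      - rewrite rsum_delta by auto. ring.
      - intros j Hj. rewrite (HY j i Hi). destruct (Nat.eqb_spec i j), (Nat.eqb_spec j i); subst; try lia; ring. }
    intros k Hk. pose proof (real_inj n G l Hsp Hl _ H0 k Hk). simpl in H. lra. }
  assert (Hu : forall j, (j < n)%nat -> Rabs (u j) <= nrm n u).
  { intros j Hj. apply (rsum_term n (fun j => Rabs (u j))); auto. intros; apply Rabs_pos. }
  apply Rle_trans with (rsum n (fun j => nrm n u * nrm n (Y j))).
  - unfold nrm at 1. rewrite (rsum_ext n _ (fun k => Rabs (d' k))) by (intros; rewrite Hdd; auto).
    apply Rle_trans with (rsum n (fun k => rsum n (fun j => Rabs (u j) * Rabs (Y j k)))).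
    { apply rsum_le; intros k Hk. unfold d'. eapply Rle_trans; [apply rsum_abs|].
      apply rsum_le; intros j Hj. rewrite Rabs_mult. lra. }
    rewrite rsum_swap. apply rsum_le; intros j Hj. rewrite rsum_scal. unfold nrm at 2.
    apply Rmult_le_compat_r; auto. apply nrm_nonneg.
  - rewrite rsum_scal. pose proof (nrm_nonneg n u). fold u. nra.
Qed.

Lemma Ppos1 n G : nonneg_mx n G -> spectral_radius_lt n G 1 -> Ppos n G 1.
Proof.
  intros HG Hsp. apply P_one; auto. intros l Hl. split.
  - apply real_surj; auto.
  - apply real_K; auto.
Qed.

Definition gd := gauss_density_unnorm.
Definition Phi (t : R) : R := RInt gd 0 t.

Lemma gd_cont x : continuous gd x.
Proof. apply continuity_pt_filterlim. apply gauss_continuity. Qed.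

Lemma gd_pos x : 0 < gd x.
Proof. unfold gd, gauss_density_unnorm. apply exp_pos. Qed.

Lemma gd_ex a b : ex_RInt gd a b.
Proof. apply (@ex_RInt_continuous R_CompleteNormedModule). intros; apply gd_cont. Qed.

Lemma QN_Phi t : QN t = / 2 - / sqrt (2 * PI) * Phi t.
Proof. unfold QN, Phi. rewrite (RInt_Reals gd 0 t (gauss_integrable 0 t)). reflexivity. Qed.

Lemma Phi_mono t1 t2 : t1 <= t2 -> Phi t1 <= Phi t2.
Proof.
  intros H. unfold Phi. rewrite <- (RInt_Chasles gd 0 t1 t2) by apply gd_ex.
  assert (0 <= RInt gd t1 t2). { apply RInt_ge_0; auto. apply gd_ex. intros; left; apply gd_pos. }
  simpl. unfold plus; simpl. lra.
Qed.

Lemma Phi_deriv x : is_derive Phi x (gd x).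
Proof.
  apply (is_derive_RInt gd Phi 0 x).
  - apply filter_forall. intros b. unfold Phi. apply (@RInt_correct R_CompleteNormedModule). apply gd_ex.
  - apply gd_cont.
Qed.

Lemma c_pos : 0 < / sqrt (2 * PI).
Proof. apply Rinv_0_lt_compat. apply sqrt_lt_R0. pose proof PI_RGT_0. lra. Qed.

Lemma QN_anti t1 t2 : t1 <= t2 -> QN t2 <= QN t1.
Proof. intros H. rewrite !QN_Phi. pose proof (Phi_mono _ _ H). pose proof c_pos. nra. Qed.

Lemma exp_le' x y : x <= y -> exp x <= exp y.
Proof. intros [H|H]; [left; apply exp_increasing; auto| subst; lra]. Qed.

Lemma ln_sqrt' R : 0 < R -> ln (sqrt R) = ln R / 2.
Proof. intros H. assert (ln R = ln (sqrt R * sqrt R)) by (rewrite sqrt_sqrt; lra).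
  rewrite ln_mult in H0 by (apply sqrt_lt_R0; auto). lra. Qed.

Definition Hf (a s : R) : R := Phi (a * s) - Phi s.

Lemma Hf_deriv a s : is_derive (Hf a) s (a * gd (a * s) - gd s).
Proof.
  unfold Hf. apply (is_derive_minus (fun s => Phi (a * s)) Phi).
  - apply (is_derive_comp Phi (fun s => a * s) s (gd (a * s)) a).
    + apply Phi_deriv.
    + auto_derive; auto; ring.
  - apply Phi_deriv.
Qed.

Lemma tau_gt1 R : 1 < R -> tau R = ln R / (R - 1).
Proof. intros H. unfold tau. destruct (Req_EM_T R 1); [lra|reflexivity]. Qed.

Lemma lnpos R : 1 < R -> 0 < ln R.
Proof. intros. rewrite <- ln_1. apply ln_increasing; lra. Qed.

Lemma sign_lemma R s : 1 < R -> 0 <= s ->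
  let a := / sqrt R in let s0 := sqrt (tau R * R) in
  (s0 <= s -> 0 <= a * gd (a * s) - gd s) /\ (s <= s0 -> a * gd (a * s) - gd s <= 0).
Proof.
  intros HR Hs a s0.
  assert (HsR : 0 < sqrt R) by (apply sqrt_lt_R0; lra).
  assert (Hta : tau R = ln R / (R - 1)) by (apply tau_gt1; auto).
  assert (HL := lnpos R HR).
  assert (Ht0 : 0 <= tau R * R). { rewrite Hta. apply Rmult_le_pos; [|lra]. apply Rlt_le, Rdiv_lt_0_compat; lra. }
  assert (Hs0 : s0 * s0 = tau R * R) by (apply sqrt_sqrt; auto).
  assert (Hs00 : 0 <= s0) by apply sqrt_pos.
  assert (Haa : a * a = / R). { unfold a. rewrite <- Rinv_mult. rewrite sqrt_sqrt; lra. }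
  assert (Ha : a = exp (- (ln R / 2))). { unfold a. rewrite <- ln_sqrt' by lra. rewrite <- ln_Rinv by auto. rewrite exp_ln; auto. apply Rinv_0_lt_compat; auto. }
  assert (Eq : a * gd (a * s) = exp (- (ln R / 2) - (/ R) * (s * s) / 2)).
  { unfold gd, gauss_density_unnorm. rewrite Ha at 1. rewrite <- exp_plus. f_equal.
    replace (a * s * (a * s)) with ((a * a) * (s * s)) by ring. rewrite Haa. field. lra. }
  assert (Key : (ln R * R <= s * s * (R - 1)) <-> tau R * R <= s * s).
  { rewrite Hta. split; intros H.
    - apply (Rmult_le_reg_r (R - 1)); [lra|]. replace (ln R / (R - 1) * R * (R - 1)) with (ln R * R) by (field; lra). lra.
    - apply (Rmult_le_compat_r (R - 1)) in H; [|lra]. replace (ln R / (R - 1) * R * (R - 1)) with (ln R * R) in H by (field; lra). lra. }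
  split; intros H.
  - rewrite Eq. unfold gd, gauss_density_unnorm. assert (s0 * s0 <= s * s) by nra.
    assert (ln R * R <= s * s * (R - 1)) by (apply Key; lra).
    assert (- (s * s) / 2 <= - (ln R / 2) - / R * (s * s) / 2).
    { apply (Rmult_le_reg_r (2 * R)); [lra|].
      replace ((- (ln R / 2) - / R * (s * s) / 2) * (2 * R)) with (- (ln R * R) - s * s) by (field; lra). nra. }
    pose proof (exp_le' _ _ H2). lra.
  - rewrite Eq. unfold gd, gauss_density_unnorm. assert (s * s <= s0 * s0) by nra.
    assert (s * s * (R - 1) <= ln R * R).
    { rewrite Hta in Hs0. apply (Rmult_le_compat_r (R - 1)) in H0; [|lra]. rewrite Hs0 in H0.
      replace (ln R / (R - 1) * R * (R - 1)) with (ln R * R) in H0 by (field; lra). lra. }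
    assert (- (ln R / 2) - / R * (s * s) / 2 <= - (s * s) / 2).
    { apply (Rmult_le_reg_r (2 * R)); [lra|].
      replace ((- (ln R / 2) - / R * (s * s) / 2) * (2 * R)) with (- (ln R * R) - s * s) by (field; lra). nra. }
    pose proof (exp_le' _ _ H2). lra.
Qed.

Lemma Hf_cont a x : continuity_pt (Hf a) x.
Proof. apply continuity_pt_filterlim. apply (@ex_derive_continuous R_AbsRing R_NormedModule). eexists. apply Hf_deriv. Qed.

Lemma min_lemma R s : 1 <= R -> 0 <= s ->
  Hf (/ sqrt R) (sqrt (tau R * R)) <= Hf (/ sqrt R) s.
Proof.
  intros HR Hs. destruct (Req_dec R 1) as [->|HR1].
  - rewrite sqrt_1, Rinv_1. unfold Hf. rewrite !Rmult_1_l. lra.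
  - assert (HR' : 1 < R) by lra.
    set (a := / sqrt R). set (s0 := sqrt (tau R * R)).
    assert (Hs00 : 0 <= s0) by apply sqrt_pos.
    destruct (Rle_dec s0 s) as [Hle|Hgt].
    + destruct (MVT_gen (Hf a) s0 s (fun x => a * gd (a * x) - gd x)) as [c [Hc Hm]].
      { intros; apply Hf_deriv. } { intros; apply Hf_cont. }
      rewrite Rmin_left, Rmax_right in Hc by auto.
      destruct (sign_lemma R c HR' ltac:(lra)) as [H1 _]. fold a s0 in H1.
      specialize (H1 ltac:(lra)). nra.
    + destruct (MVT_gen (Hf a) s s0 (fun x => a * gd (a * x) - gd x)) as [c [Hc Hm]].
      { intros; apply Hf_deriv. } { intros; apply Hf_cont. }
      rewrite Rmin_left, Rmax_right in Hc by lra.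
      destruct (sign_lemma R c HR' ltac:(lra)) as [_ H1]. fold a s0 in H1.
      specialize (H1 ltac:(lra)). nra.
Qed.

Definition PevR (r : R) : R := / 2 * (1 - Qchi2_1 (tau r)) + / 2 * Qchi2_1 (tau r * r).

Lemma tau_nonneg R : 1 <= R -> 0 < tau R.
Proof. intros H. destruct (Req_dec R 1) as [->|].
  - unfold tau. destruct (Req_EM_T 1 1); lra.
  - rewrite tau_gt1 by lra. apply Rdiv_lt_0_compat; [apply lnpos|]; lra. Qed.

Lemma Qchi_pos t : 0 < t -> Qchi2_1 t = 2 * QN (sqrt t).
Proof. intros H. unfold Qchi2_1. destruct (Rle_dec t 0); [lra|reflexivity]. Qed.

Lemma PevR_formula R : 1 <= R ->
  PevR R = / 2 + / sqrt (2 * PI) * Hf (/ sqrt R) (sqrt (tau R * R)).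
Proof.
  intros HR. pose proof (tau_nonneg R HR) as Ht.
  assert (HsR : 0 < sqrt R) by (apply sqrt_lt_R0; lra).
  assert (E : / sqrt R * sqrt (tau R * R) = sqrt (tau R)).
  { rewrite sqrt_mult by lra. field. lra. }
  unfold PevR, Hf. rewrite E. rewrite !Qchi_pos by nra. rewrite !QN_Phi. field. apply Rgt_not_eq, sqrt_lt_R0. pose proof PI_RGT_0; lra.
Qed.

Lemma PevR_mono R1 R2 : 1 <= R1 -> R1 <= R2 -> PevR R2 <= PevR R1.
Proof.
  intros H1 H12. rewrite !PevR_formula by lra.
  set (s1 := sqrt (tau R1 * R1)).
  assert (Hs1 : 0 <= s1) by apply sqrt_pos.
  pose proof (min_lemma R2 s1 ltac:(lra) Hs1).
  assert (Ha : / sqrt R2 <= / sqrt R1).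
  { apply Rinv_le_contravar. apply sqrt_lt_R0; lra. apply sqrt_le_1; lra. }
  assert (Phi (/ sqrt R2 * s1) <= Phi (/ sqrt R1 * s1)) by (apply Phi_mono; nra).
  pose proof c_pos. unfold Hf in *. nra.
Qed.

Lemma Cmod_realD l : 0 <= l -> Defs.Cmod (Defs.RtoC l) = l.
Proof. apply Cmod_real. Qed.

Lemma Cmod_Csum n f : Defs.Cmod (Csum n f) <= rsum n (fun k => Defs.Cmod (f k)).
Proof.
  induction n.
  - simpl. unfold Defs.Cmod. simpl. replace (0 * (0 * 1) + 0 * (0 * 1)) with 0 by ring. rewrite sqrt_0. lra.
  - rewrite Csum_S. simpl. eapply Rle_trans; [apply (Cmod_triangle (Csum n f) (f n))|]. 
    change (Cmod (Csum n f)) with (Defs.Cmod (Csum n f)). change (Cmod (f n)) with (Defs.Cmod (f n)). lra.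
Qed.

Lemma Cmod_nonneg z : 0 <= Defs.Cmod z.
Proof. apply sqrt_pos. Qed.


Lemma sub_inv n G : nonneg_mx n G -> spectral_radius_lt n G 1 -> forall w,
  (forall i, (i < n)%nat -> w i <= rsum n (fun k => G i k * w k)) -> forall i, (i < n)%nat -> w i <= 0.
Proof.
  intros HG Hsp w Hw. pose proof (Ppos1 n G HG Hsp (fun k => - w k)) as H.
  intros i Hi. assert (0 <= - w i); [|lra]. apply H; auto. intros j Hj. unfold rmv.
  rewrite (rsum_ext n _ (fun k => - (G j k * w k))) by (intros; ring). rewrite rsum_opp.
  specialize (Hw j Hj). lra.
Qed.

Lemma real_part n G q : (q < n)%nat -> nonneg_mx n G -> spectral_radius_lt n G 1 ->
  let x1 := resolvent_eq n G q (Defs.RtoC 1) in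
  (forall i, (i < n)%nat -> snd (x1 i) = 0) /\
  (forall i, (i < n)%nat -> rmv n G 1 (fun k => fst (x1 k)) i = if (i =? q)%nat then 1 else 0) /\
  (forall i, (i < n)%nat -> 0 <= fst (x1 i)).
Proof.
  intros Hq HG Hsp x1.
  assert (Hz : 1 <= Defs.Cmod (Defs.RtoC 1)) by (rewrite (Cmod_realD 1) by lra; lra).
  pose proof (resolvent_spec n G q _ Hsp Hz) as Hs. fold x1 in Hs.
  assert (Hre : forall i, (i < n)%nat -> rmv n G 1 (fun k => fst (x1 k)) i = if (i =? q)%nat then 1 else 0).
  { intros i Hi. specialize (Hs i Hi). apply (f_equal fst) in Hs. simpl in Hs.
    rewrite Cmxv_fst in Hs. unfold rmv. rewrite <- Hs. ring. }
  split; [|split; auto].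
  - apply (real_inj n G 1 Hsp ltac:(lra)). intros i Hi. specialize (Hs i Hi). apply (f_equal snd) in Hs. simpl in Hs.
    rewrite Cmxv_snd in Hs. unfold rmv. lra.
  - apply (Ppos1 n G HG Hsp). intros i Hi. rewrite Hre by auto. destruct (i =? q)%nat; lra.
Qed.

Lemma mod_bound n G q z i : (q < n)%nat -> nonneg_mx n G -> spectral_radius_lt n G 1 ->
  Defs.Cmod z = 1 -> (i < n)%nat ->
  Defs.Cmod (Tf n G q i z) <= fst (Tf n G q i (Defs.RtoC 1)).
Proof.
  intros Hq HG Hsp Hz Hi.
  destruct (real_part n G q Hq HG Hsp) as [_ [Hre _]].
  set (x1 := resolvent_eq n G q (Defs.RtoC 1)) in *.
  pose proof (resolvent_spec n G q z Hsp ltac:(lra)) as Hs.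
  set (x := resolvent_eq n G q z) in *.
  set (a := fun k => Defs.Cmod (x k)).
  assert (Ha : forall i, (i < n)%nat -> rmv n G 1 a i <= rmv n G 1 (fun k => fst (x1 k)) i).
  { intros k Hk. rewrite Hre by auto. specialize (Hs k Hk).
    assert (E : Cmul z (x k) = Cadd (Cmxv n G x k) (Defs.RtoC (if (k =? q)%nat then 1 else 0))).
    { rewrite <- Hs. apply injective_projections; simpl; ring. }
    assert (E2 : Defs.Cmod (Cmul z (x k)) = a k).
    { change (Cmod (Cmult z (x k)) = a k). rewrite Cmod_mult. change (Cmod z) with (Defs.Cmod z). rewrite Hz. unfold a. change (Cmod (x k)) with (Defs.Cmod (x k)). ring. }
    rewrite E in E2.
    assert (E3 : Defs.Cmod (Cadd (Cmxv n G x k) (Defs.RtoC (if (k =? q)%nat then 1 else 0))) <=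
       rsum n (fun l => G k l * a l) + (if (k =? q)%nat then 1 else 0)).
    { eapply Rle_trans; [apply (Cmod_triangle (Cmxv n G x k))|].
      change (Cmod (Cmxv n G x k)) with (Defs.Cmod (Cmxv n G x k)).
      change (Cmod (Defs.RtoC (if (k =? q)%nat then 1 else 0))) with (Defs.Cmod (Defs.RtoC (if (k =? q)%nat then 1 else 0))).
      rewrite Cmod_realD by (destruct (k =? q)%nat; lra).
      apply Rplus_le_compat_r. unfold Cmxv. eapply Rle_trans; [apply Cmod_Csum|].
      apply rsum_le. intros l Hl. change (Cmod (Cmult (RtoC (G k l)) (x l)) <= G k l * a l).
      rewrite Cmod_mult. change (Cmod (RtoC (G k l))) with (Defs.Cmod (Defs.RtoC (G k l))).
      rewrite Cmod_realD by (apply HG; auto). unfold a. apply Rle_refl. }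
    unfold rmv. lra. }
  assert (Hd : forall k, (k < n)%nat -> 0 <= fst (x1 k) - a k).
  { apply (Ppos1 n G HG Hsp). intros k Hk. specialize (Ha k Hk). unfold rmv in *.
    rewrite (rsum_ext n _ (fun l => G k l * fst (x1 l) + - (G k l * a l))) by (intros; ring).
    rewrite rsum_plus, rsum_opp. lra. }
  specialize (Hd i Hi). unfold Tf. fold x x1. unfold a in Hd. lra.
Qed.

Lemma T1_eq n G q i : (q < n)%nat -> nonneg_mx n G -> spectral_radius_lt n G 1 -> (i < n)%nat ->
  Defs.Cmod (Tf n G q i (Defs.RtoC 1)) = fst (Tf n G q i (Defs.RtoC 1)).
Proof.
  intros Hq HG Hsp Hi. destruct (real_part n G q Hq HG Hsp) as [Him [_ Hpos]].
  unfold Tf. specialize (Him i Hi). specialize (Hpos i Hi).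
  set (x1 := resolvent_eq n G q (Defs.RtoC 1)) in *.
  unfold Defs.Cmod. rewrite Him. replace (fst (x1 i) ^ 2 + 0 ^ 2) with (fst (x1 i) * fst (x1 i)) by ring.
  apply sqrt_square; auto.
Qed.

Lemma Hinf_eq n G q i : (q < n)%nat -> nonneg_mx n G -> spectral_radius_lt n G 1 -> (i < n)%nat ->
  Hinf_norm n G q i = fst (Tf n G q i (Defs.RtoC 1)).
Proof.
  intros Hq HG Hsp Hi.
  set (U := fun y => exists z, Defs.Cmod z = 1 /\ y = Defs.Cmod (Tf n G q i z)).
  assert (Hl : is_lub U (fst (Tf n G q i (Defs.RtoC 1)))).
  { split.
    - intros y [z [Hz ->]]. apply mod_bound; auto.
    - intros b Hb. apply Hb. exists (Defs.RtoC 1). split; [apply Cmod_realD; lra|].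
      symmetry. apply T1_eq; auto. }
  unfold Hinf_norm. fold U.
  assert (Hs : is_lub U (epsilon (inhabits 0) (is_lub U))) by (apply epsilon_spec; eexists; eauto).
  destruct Hs as [Hs1 Hs2]. destruct Hl as [Hl1 Hl2].
  apply Rle_antisym; [apply Hs2; auto | apply Hl2; auto].
Qed.

Lemma cut_facts n G q Sset Pset j :
  node_cutset n G q Sset (fun i => Nat.eqb i j) Pset ->
  (j < n)%nat /\
  (forall i, Pset i = true -> (i < n)%nat /\ i <> q /\ i <> j /\ Sset i = false) /\
  (forall i k, Pset i = true -> (k < n)%nat -> Pset k = false -> k <> j -> G i k = 0) /\
  (forall k, Pset k = true -> (k =? j)%nat = false).
Proof.
  intros [Hb [Hpart [_ [_ [_ [Hq [_ Hsep]]]]]]].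
  assert (Hj : (j < n)%nat) by (apply Hb; right; left; apply Nat.eqb_refl).
  split; [auto|]. split; [|split].
  - intros i Hi. assert (Hin : (i < n)%nat) by (apply Hb; right; right; auto).
    split; [auto|]. destruct (Hpart i Hin) as [[? [? ?]]|[[? [? ?]]|[? [? ?]]]]; try congruence.
    split; [intros ->; congruence|]. split; [intros ->; rewrite Nat.eqb_refl in *; congruence|auto].
  - intros i k Hi Hk HPk Hkj. destruct (Hpart k Hk) as [[HS [_ _]]|[[_ [HC _]]|[_ [_ HP]]]].
    + apply (Hsep i k Hi HS).
    + apply Nat.eqb_eq in HC. lia.
    + congruence.
  - intros k Hk. destruct (Nat.eqb_spec k j); auto. subst.
    destruct (Hpart j Hj) as [[? [? ?]]|[[? [? ?]]|[? [? ?]]]]; rewrite Nat.eqb_refl in *; congruence.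
Qed.

Lemma rowsum_unfold n G j Pset i :
  Gtilde_rowsum n G (fun i => Nat.eqb i j) Pset i = rsum n (fun k => if orb (Pset k) (k =? j)%nat then G i k else 0).
Proof. reflexivity. Qed.

Lemma max_principle n G q Sset Pset j (xr : nat -> R) (eps : bool) :
  nonneg_mx n G -> spectral_radius_lt n G 1 ->
  node_cutset n G q Sset (fun i => Nat.eqb i j) Pset ->
  (forall i, (i < n)%nat -> 0 <= xr i) ->
  (forall i, Pset i = true -> xr i = rsum n (fun k => G i k * xr k)) ->
  (forall i, Pset i = true ->
     if eps then Gtilde_rowsum n G (fun i => Nat.eqb i j) Pset i <= 1
     else Gtilde_rowsum n G (fun i => Nat.eqb i j) Pset i >= 1) ->
  forall j1, Pset j1 = true -> if eps then xr j1 <= xr j else xr j <= xr j1.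
Proof.
  intros HG Hsp Hcut Hx0 Hfix Hrow.
  destruct (cut_facts n G q Sset Pset j Hcut) as [Hj [HP [HS HPj]]].
  set (sg := if eps then 1 else -1).
  set (w := fun k => if Pset k then Rmax (sg * (xr k - xr j)) 0 else 0).
  assert (Hw0 : forall k, 0 <= w k) by (intros; unfold w; destruct (Pset k); [apply Rmax_r|lra]).
  assert (Hsum0 : forall i, (i < n)%nat -> 0 <= rsum n (fun k => G i k * w k)).
  { intros i Hi. apply rsum_nonneg. intros k Hk. apply Rmult_le_pos; auto. }
  assert (Hsub : forall i, (i < n)%nat -> w i <= rsum n (fun k => G i k * w k)).
  { intros i Hi. specialize (Hsum0 i Hi). unfold w at 1. destruct (Pset i) eqn:HPi; [|lra].
    apply Rmax_lub; auto.
    set (c := fun k => if orb (Pset k) (k =? j)%nat then G i k else 0).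
    assert (E1 : rsum n (fun k => G i k * xr k) = rsum n (fun k => c k * xr k)).
    { apply rsum_ext. intros k Hk. unfold c. destruct (Pset k) eqn:HPk; simpl; [reflexivity|].
      destruct (Nat.eqb_spec k j); [reflexivity|]. rewrite (HS i k HPi Hk HPk n0). ring. }
    assert (E2 : rsum n (fun k => c k * (sg * (xr k - xr j))) =
                 sg * (xr i - xr j * Gtilde_rowsum n G (fun i => Nat.eqb i j) Pset i)).
    { rewrite rowsum_unfold. fold c. rewrite (Hfix i HPi), E1.
      rewrite (rsum_ext n _ (fun k => sg * (c k * xr k) + - ((sg * xr j) * c k))) by (intros; ring).
      rewrite rsum_plus, rsum_opp, !rsum_scal. ring. }
    assert (L1 : rsum n (fun k => c k * (sg * (xr k - xr j))) <= rsum n (fun k => G i k * w k)).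
    { apply rsum_le. intros k Hk. unfold c, w. destruct (Pset k) eqn:HPk; simpl.
      - pose proof (Rmax_l (sg * (xr k - xr j)) 0). pose proof (HG i k Hi Hk). nra.
      - destruct (Nat.eqb_spec k j). subst. lra. lra. }
    specialize (Hrow i HPi). pose proof (Hx0 j Hj).
    unfold sg in *; destruct eps; nra. }
  intros j1 Hj1. pose proof (sub_inv n G HG Hsp w Hsub j1 (proj1 (HP j1 Hj1))) as Hz.
  unfold w in Hz. rewrite Hj1 in Hz. pose proof (Rmax_l (sg * (xr j1 - xr j)) 0).
  unfold sg in *; destruct eps; lra.
Qed.

Lemma frac_mono K c v T1 T2 : 0 <= K -> 0 <= c -> 0 < v -> 0 <= T1 -> T1 <= T2 ->
  K * T1 ^ 2 / (c * T1 ^ 2 + v) <= K * T2 ^ 2 / (c * T2 ^ 2 + v).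
Proof.
  intros HK Hc Hv H1 H12.
  assert (D1 : 0 < c * T1 ^ 2 + v) by (pose proof (pow2_ge_0 T1); nra).
  assert (D2 : 0 < c * T2 ^ 2 + v) by (pose proof (pow2_ge_0 T2); nra).
  assert (E : K * T2 ^ 2 / (c * T2 ^ 2 + v) - K * T1 ^ 2 / (c * T1 ^ 2 + v) =
     K * v * (T2 ^ 2 - T1 ^ 2) / ((c * T1 ^ 2 + v) * (c * T2 ^ 2 + v))) by (field; lra).
  assert (0 <= K * v * (T2 ^ 2 - T1 ^ 2) / ((c * T1 ^ 2 + v) * (c * T2 ^ 2 + v))).
  { apply Rmult_le_pos. apply Rmult_le_pos. nra. nra. left. apply Rinv_0_lt_compat. nra. }
  lra.
Qed.

Lemma Rs_ge1 a b v h : b <= a -> 0 <= b -> 0 < v -> 1 <= (a * h ^ 2 + v) / (b * h ^ 2 + v).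
Proof.
  intros Hab Hb Hv. pose proof (pow2_ge_0 h).
  assert (D : 0 < b * h ^ 2 + v) by nra.
  apply (Rmult_le_reg_r (b * h ^ 2 + v)); auto. field_simplify; nra.
Qed.

Lemma Rs_mono a b v h1 h2 : b <= a -> 0 <= b -> 0 < v -> 0 <= h1 -> h1 <= h2 ->
  (a * h1 ^ 2 + v) / (b * h1 ^ 2 + v) <= (a * h2 ^ 2 + v) / (b * h2 ^ 2 + v).
Proof.
  intros Hab Hb Hv H1 H12.
  assert (D1 : 0 < b * h1 ^ 2 + v) by (pose proof (pow2_ge_0 h1); nra).
  assert (D2 : 0 < b * h2 ^ 2 + v) by (pose proof (pow2_ge_0 h2); nra).
  assert (E : (a * h2 ^ 2 + v) / (b * h2 ^ 2 + v) - (a * h1 ^ 2 + v) / (b * h1 ^ 2 + v) =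
     (a - b) * v * (h2 ^ 2 - h1 ^ 2) / ((b * h1 ^ 2 + v) * (b * h2 ^ 2 + v))) by (field; lra).
  assert (0 <= (a - b) * v * (h2 ^ 2 - h1 ^ 2) / ((b * h1 ^ 2 + v) * (b * h2 ^ 2 + v))).
  { apply Rmult_le_pos. apply Rmult_le_pos. nra. nra. left. apply Rinv_0_lt_compat. nra. }
  lra.
Qed.

Lemma cmp_lemma n G q N mu sc2 s12 s22 sv2 l1 l2 :
  (q < n)%nat -> nonneg_mx n G -> spectral_radius_lt n G 1 -> 0 < sv2 -> 0 < sc2 ->
  0 <= s22 -> s22 < s12 -> (l1 < n)%nat -> (l2 < n)%nat ->
  fst (Tf n G q l1 (Defs.RtoC 1)) <= fst (Tf n G q l2 (Defs.RtoC 1)) ->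
  Pem n G q N mu sc2 sv2 l2 <= Pem n G q N mu sc2 sv2 l1 /\
  Pev n G q s12 s22 sv2 l2 <= Pev n G q s12 s22 sv2 l1.
Proof.
  intros Hq HG Hsp Hv Hc H22 H12 Hl1 Hl2 Hx.
  destruct (real_part n G q Hq HG Hsp) as [_ [_ Hpos]].
  assert (P1 : 0 <= fst (Tf n G q l1 (Defs.RtoC 1))) by (apply Hpos; auto).
  split.
  - unfold Pem, eta_s. rewrite !T1_eq by auto. apply QN_anti.
    apply Rmult_le_compat_r; [lra|]. apply sqrt_le_1_alt. apply frac_mono; auto.
    apply Rmult_le_pos; [apply pos_INR|apply pow2_ge_0]. lra.
  - unfold Pev. change (PevR (Rs n G q s12 s22 sv2 l2) <= PevR (Rs n G q s12 s22 sv2 l1)).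
    apply PevR_mono.
    + unfold Rs. apply Rs_ge1; lra.
    + unfold Rs. rewrite !Hinf_eq by auto. apply Rs_mono; lra.
Qed.

Theorem proposition4 (n : nat) (G : nat -> nat -> R) (q j : nat)
  (Sset Pset : nat -> bool) (N : nat) (mu1 mu2 sc2 s12 s22 sv2 : R) :
  (q < n)%nat ->
  nonneg_mx n G ->
  spectral_radius_lt n G 1 ->
  0 < sv2 ->
  node_cutset n G q Sset (fun i => Nat.eqb i j) Pset ->
  (1 <= N)%nat -> 0 < sc2 ->
  0 <= s22 -> s22 < s12 ->
  ((forall i, Pset i = true -> Gtilde_rowsum n G (fun i => Nat.eqb i j) Pset i <= 1) ->
   forall j1, Pset j1 = true ->
     Pem n G q N (mu2 - mu1) sc2 sv2 j <= Pem n G q N (mu2 - mu1) sc2 sv2 j1 /\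
     Pev n G q s12 s22 sv2 j <= Pev n G q s12 s22 sv2 j1) /\
  ((forall i, Pset i = true -> Gtilde_rowsum n G (fun i => Nat.eqb i j) Pset i > 1) ->
   forall j1, Pset j1 = true ->
     Pem n G q N (mu2 - mu1) sc2 sv2 j >= Pem n G q N (mu2 - mu1) sc2 sv2 j1 /\
     Pev n G q s12 s22 sv2 j >= Pev n G q s12 s22 sv2 j1).
Proof.
  intros Hq HG Hsp Hv Hcut HN Hc H22 H12.
  destruct (cut_facts n G q Sset Pset j Hcut) as [Hj [HP _]].
  destruct (real_part n G q Hq HG Hsp) as [_ [Hre Hpos]].
  set (xr := fun k => fst (Tf n G q k (Defs.RtoC 1))).
  assert (Hx0 : forall i, (i < n)%nat -> 0 <= xr i) by (intros; apply Hpos; auto).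
  assert (Hfix : forall i, Pset i = true -> xr i = rsum n (fun k => G i k * xr k)).
  { intros i Hi. destruct (HP i Hi) as [Hin [Hiq _]]. specialize (Hre i Hin).
    unfold rmv in Hre. destruct (Nat.eqb_spec i q); [contradiction|].
    unfold xr, Tf. lra. }
  split.
  - intros Hrow j1 Hj1.
    pose proof (max_principle n G q Sset Pset j xr true HG Hsp Hcut Hx0 Hfix Hrow j1 Hj1) as Hm.
    simpl in Hm. apply (cmp_lemma n G q N (mu2 - mu1) sc2 s12 s22 sv2 j1 j); auto.
    apply (proj1 (HP j1 Hj1)).
  - intros Hrow j1 Hj1.
    assert (Hrow' : forall i, Pset i = true -> Gtilde_rowsum n G (fun i => Nat.eqb i j) Pset i >= 1)
      by (intros i Hi; specialize (Hrow i Hi); lra).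
    pose proof (max_principle n G q Sset Pset j xr false HG Hsp Hcut Hx0 Hfix Hrow' j1 Hj1) as Hm.
    simpl in Hm. destruct (cmp_lemma n G q N (mu2 - mu1) sc2 s12 s22 sv2 j j1) as [A B]; auto.
    apply (proj1 (HP j1 Hj1)). split; apply Rle_ge; auto.
Qed.
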